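(* Let $n\ge1$, identify $\mathbb{R}^{n+1}=\mathbb{R}^n\times\mathbb{R}$, let $f\colon\mathbb{R}^n\to(0,\infty)$ be continuous with epigraph $L=\{(x,y)\mid f(x)\le y\}$, and let $K\subset\mathbb{R}^{n+1}$ be a nonempty closed set with $K\cap L=\emptyset$ containing a point $(x_*,y_* )$ with $y_*\le 0$. Let $G^+$, $G^-$ be the upper and lower equidistant functions associated with $K$ and $L$. Then for every $x\in\mathbb{R}^n$ and $y\in\mathbb{R}$: if $y<G^-(x)$ then $d((x,y),K)<d((x,y),L)$, and if $G^+(x)<y$ then $d((x,y),K)>d((x,y),L)$.
   Context: $d(p,A)=\inf\{|p-q|\mid q\in A\}$ (Euclidean distance). The upper and lower equidistant functions are $G^+(x)=\sup\{y\in\mathbb{R}\mid d((x,y),K)=d((x,y),L)\}$ and $G^-(x)=\inf\{y\in\mathbb{R}\mid d((x,y),K)=d((x,y),L)\}$ (under the stated assumptions these sets are nonempty and bounded, so $G^\pm(x)$ are real numbers). *)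

(* Defs.v *)
(* R^(n+1) is identified with 'rV[R]_n * R. *)
From HB Require Import structures.
From mathcomp Require Import all_boot all_order all_algebra.
From mathcomp Require Import all_classical all_reals all_analysis.
Set Implicit Arguments. Unset Strict Implicit. Unset Printing Implicit Defensive.
Import Order.TTheory GRing.Theory Num.Theory.
Import numFieldNormedType.Exports.
Local Open Scope classical_set_scope.
Local Open Scope ring_scope.

Section Defs.
Variables (R : realType) (n : nat).
Definition pt := ('rV[R]_n * R)%type.

Definition edist (p q : pt) : R :=
  Num.sqrt (\sum_(i < n) (p.1 ord0 i - q.1 ord0 i) ^+ 2 + (p.2 - q.2) ^+ 2).

Definition setdist (p : pt) (A : set pt) : R :=
  inf [set r | exists2 q, A q & r = edist p q].

Definition epigraph (f : 'rV[R]_n -> R) : set pt := [set p | f p.1 <= p.2].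

Definition equi_set (K L : set pt) (x : 'rV[R]_n) : set R :=
  [set y | setdist (x, y) K = setdist (x, y) L].

Definition Gplus (K L : set pt) (x : 'rV[R]_n) : R := sup (equi_set K L x).
Definition Gminus (K L : set pt) (x : 'rV[R]_n) : R := inf (equi_set K L x).
End Defs.

(* Main.v *)
Require Import Defs.
From HB Require Import structures.
From mathcomp Require Import all_boot all_order all_algebra.
From mathcomp Require Import all_classical all_reals all_analysis.
From mathcomp Require Import lra.
Import Order.TTheory GRing.Theory Num.Theory.
Import numFieldNormedType.Exports.
Local Open Scope classical_set_scope.
Local Open Scope ring_scope.
Set Implicit Arguments. Unset Strict Implicit. Unset Printing Implicit Defensive.
Section Helpers.
Variables (R : realType) (n : nat).
Implicit Types (p q : ('rV[R]_n * R)%type) (A : set ('rV[R]_n * R)%type).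

Lemma edist_ge0 p q : 0 <= Defs.edist p q.
Proof. exact: sqrtr_ge0. Qed.

Lemma sumsq_ge0 (u v : 'rV[R]_n) : 0 <= \sum_(i < n) (u ord0 i - v ord0 i) ^+ 2.
Proof. by apply: sumr_ge0 => i _; exact: sqr_ge0. Qed.

Lemma sumsq_ge_term (u v : 'rV[R]_n) j :
  (u ord0 j - v ord0 j) ^+ 2 <= \sum_(i < n) (u ord0 i - v ord0 i) ^+ 2.
Proof.
rewrite (bigD1 j) //= lerDl; apply: sumr_ge0 => i _; exact: sqr_ge0.
Qed.

Lemma edist_xx p : Defs.edist p p = 0.
Proof.
rewrite /Defs.edist big1 ?subrr ?expr0n ?addr0 ?sqrtr0 // => i _.
by rewrite subrr expr0n.
Qed.

Lemma setdist_le A p q : A q -> setdist p A <= Defs.edist p q.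
Proof.
move=> Aq; apply: ge_inf; last by exists q.
by exists 0 => r [q' _ ->]; exact: edist_ge0.
Qed.

Lemma setdist_ge A p c : A !=set0 -> (forall q, A q -> c <= Defs.edist p q) ->
  c <= setdist p A.
Proof.
move=> [q Aq] H; apply: lb_le_inf.
  by exists (Defs.edist p q); exists q.
by move=> r [q' Aq' ->]; exact: H.
Qed.

Lemma setdist_ge0 A p : A !=set0 -> 0 <= setdist p A.
Proof. by move=> A0; apply: setdist_ge => // q _; exact: edist_ge0. Qed.

Lemma sqrt_lip (S a b : R) : 0 <= S ->
  Num.sqrt (S + a ^+ 2) <= Num.sqrt (S + b ^+ 2) + `|a - b|.
Proof.
move=> S0.
set s := Num.sqrt (S + b ^+ 2).
have s0 : 0 <= s by exact: sqrtr_ge0.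
have ss : s ^+ 2 = S + b ^+ 2 by rewrite sqr_sqrtr // addr_ge0 // sqr_ge0.
have bs : `|b| <= s.
  by rewrite -sqrtr_sqr ler_wsqrtr // lerDr.
have d0 : 0 <= `|a - b| by [].
have dd : `|a - b| ^+ 2 = (a - b) ^+ 2 by rewrite real_normK ?num_real.
have bd : b * (a - b) <= `|b| * `|a - b|.
  by rewrite -normrM real_ler_norm ?num_real.
have bb : `|b| ^+ 2 = b ^+ 2 by rewrite real_normK ?num_real.
rewrite -(ger0_norm (addr_ge0 s0 d0)) -sqrtr_sqr ler_wsqrtr //.
have b0 : 0 <= `|b| by [].
nra.
Qed.

Lemma edist_vert x y y' q :
  Defs.edist (x, y) q <= Defs.edist (x, y') q + `|y - y'|.
Proof.
rewrite /Defs.edist /=.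
have -> : y - y' = (y - q.2) - (y' - q.2) by rewrite opprB addrA subrK.
exact: sqrt_lip (sumsq_ge0 _ _).
Qed.

Lemma setdist_vert A x y y' : A !=set0 ->
  setdist (x, y) A <= setdist (x, y') A + `|y - y'|.
Proof.
move=> A0; rewrite -lerBlDr; apply: setdist_ge => // q Aq.
rewrite lerBlDr; apply: le_trans _ (edist_vert x y y' q).
exact: setdist_le.
Qed.

Lemma coord_le_edist p q j :
  `|p.1 ord0 j - q.1 ord0 j| <= Defs.edist p q.
Proof.
rewrite -sqrtr_sqr; apply: ler_wsqrtr.
apply: le_trans (sumsq_ge_term p.1 q.1 j) _; rewrite lerDl; exact: sqr_ge0.
Qed.

Lemma snd_le_edist p q : `|p.2 - q.2| <= Defs.edist p q.
Proof.
rewrite -sqrtr_sqr; apply: ler_wsqrtr; rewrite lerDr; exact: sumsq_ge0.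
Qed.

End Helpers.
Section H2.
Variables (R : realType) (n : nat).
Implicit Types (p q : ('rV[R]_n * R)%type) (A : set ('rV[R]_n * R)%type).

Lemma setdist_pos A p : closed A -> A !=set0 -> ~ A p -> 0 < setdist p A.
Proof.
move=> hcl A0 nAp; rewrite lt_neqAle setdist_ge0 // andbT; apply/eqP => H0.
apply: nAp; move: hcl => /closure_id ->.
move=> B /nbhs_ballP [e /= e0 sub].
case: (pselect (exists2 q, A q & Defs.edist p q < e)) => [[q Aq hq]|H].
  exists q; split => //; apply: sub; split.
    split => // i j; rewrite (ord1 i) /ball /=. exact: (le_lt_trans (coord_le_edist p q j) hq).
  rewrite /ball /=; exact: (le_lt_trans (snd_le_edist p q) hq).
exfalso; have : e <= setdist p A.
  apply: setdist_ge => // q Aq; rewrite leNgt; apply/negP => hq; apply: H.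
  by exists q.
by rewrite -H0 leNgt e0.
Qed.
End H2.
Section H3.
Variables (R : realType) (n : nat).
Implicit Types (A : set ('rV[R]_n * R)%type).

Lemma setdist_lip A x t t' : A !=set0 ->
  `|setdist (x, t) A - setdist (x, t') A| <= `|t - t'|.
Proof.
move=> A0; rewrite ler_norml; apply/andP; split.
  rewrite lerNl opprB lerBlDr addrC distrC; exact: setdist_vert.
rewrite lerBlDr addrC; exact: setdist_vert.
Qed.

Lemma hcont A B x : A !=set0 -> B !=set0 ->
  continuous (fun t : R => setdist (x, t) A - setdist (x, t) B).
Proof.
move=> A0 B0 t0; apply/cvgrPdist_lt => e e0.
have e20 : 0 < e / 2 by rewrite divr_gt0.
have H := (@fcvgrPdist_lt _ R^o (nbhs t0) _ t0).1 (fun _ h => h) (e / 2) e20.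
near=> t.
have ht : `|t0 - t| < e / 2 by near: t; exact: H.
have h1 := setdist_lip x t0 t A0.
have h2 := setdist_lip x t0 t B0.
move: h1 h2; rewrite !ler_norml => /andP[h1 h1'] /andP[h2 h2'].
rewrite ltr_norml; apply/andP; split; lra.
Unshelve. all: end_near.
Qed.
End H3.
Section H4.
Variables (R : realType) (n : nat).

Lemma sqrt_lt (a b : R) : 0 < b -> a < b ^+ 2 -> Num.sqrt a < b.
Proof.
move=> b0 ab; rewrite -(ger0_norm (ltW b0)) -sqrtr_sqr ltr_sqrt //.
exact: exprn_gt0.
Qed.

Lemma lower_thr (f : 'rV[R]_n -> R) (K : set ('rV[R]_n * R)%type) x :
  continuous f -> (forall x, 0 < f x) ->
  (exists2 p : ('rV[R]_n * R)%type, K p & p.2 <= 0) ->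
  exists y0, forall t, t <= y0 -> setdist (x, t) K < setdist (x, t) (epigraph f).
Proof.
move=> hfc hfpos [[xs ys] Kp /= ys0].
set S := \sum_(i < n) (x ord0 i - xs ord0 i) ^+ 2.
have S0 : 0 <= S by exact: sumsq_ge0.
set r := S + 1.
have r0 : 0 < r by rewrite /r; lra.
pose Bx := [set v : 'rV[R]_n | forall i,
  (fun i => `[x ord0 i - r, x ord0 i + r]%classic) i (v ord0 i)].
have cB : compact Bx by apply: rV_compact => i; exact: segment_compact.
have B0 : Bx !=set0.
  by exists x => i /=; rewrite in_itv /=; apply/andP; split; lra.
have [c Bc cmin] := EVT_min_rV B0 cB (continuous_subspaceT hfc).
set m := f c.
have m0 : 0 < m by exact: hfpos.
exists (ys - S / m - 1) => t ht.
have Sm0 : 0 <= S / m by rewrite divr_ge0 // ltW.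
have mSm : m * (S / m) = S by rewrite mulrC divfK // gt_eqF.
have tys : t <= ys by lra.
have t0 : t <= 0 by lra.
have mt : m * t <= m * (ys - S / m - 1) by rewrite ler_wpM2l // ltW.
have mt' : m * t <= - S - m.
  apply: le_trans mt _; rewrite !mulrBr mSm mulr1.
  have : m * ys <= 0 by rewrite mulr_ge0_le0 // ltW.
  lra.
set cc := Num.sqrt (S + t ^+ 2).
have hK : setdist (x, t) K <= cc.
  apply: le_trans (setdist_le _ Kp) _.
  rewrite /Defs.edist /=; apply: ler_wsqrtr; rewrite lerD2l; nra.
set de := Order.min (m - t) (Num.sqrt (r ^+ 2 + t ^+ 2)).
have hL : de <= setdist (x, t) (epigraph f).
  apply: setdist_ge; first by exists (x, f x); rewrite /epigraph /=.
  move=> [q1 q2]; rewrite /epigraph /= => hq.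
  have fq0 := hfpos q1.
  case: (pselect (Bx q1)) => [Bq|nBq].
    have : m <= f q1 by apply: cmin; rewrite inE.
    move=> mq; rewrite ge_min; apply/orP; left.
    apply: le_trans (snd_le_edist _ _) => /=.
    rewrite distrC ger0_norm ?subr_ge0; lra.
  move/existsNP: nBq => [i /= hi].
  rewrite ge_min; apply/orP; right.
  rewrite /Defs.edist /=; apply: ler_wsqrtr.
  have hsum := sumsq_ge_term x q1 i.
  have hi' : r ^+ 2 <= (x ord0 i - q1 ord0 i) ^+ 2.
    rewrite in_itv /= in hi.
    case: (leP (x ord0 i - r) (q1 ord0 i)) => h1.
      have h2 : x ord0 i + r < q1 ord0 i.
        by rewrite ltNge; apply/negP => h2; apply: hi; rewrite h1 h2.
      nra.
    nra.
  have ht2 : t ^+ 2 <= (t - q2) ^+ 2 by nra.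
  lra.
have ccde : cc < de.
  rewrite lt_min; apply/andP; split.
    apply: sqrt_lt; first lra.
    nra.
  rewrite ltr_sqrt; last by apply: ltr_wpDr; [exact: sqr_ge0 | exact: exprn_gt0].
  rewrite ltrD2r /r; nra.
lra.
Qed.
End H4.
Theorem corollary1 (R : realType) (n : nat) (hn : (1 <= n)%N)
  (f : 'rV[R]_n -> R) (hfc : continuous f) (hfpos : forall x, 0 < f x)
  (K : set ('rV[R]_n * R)%type) (hKcl : closed K) (hKne : K !=set0)
  (hKL : K `&` epigraph f = set0)
  (hstar : exists2 p : ('rV[R]_n * R)%type, K p & p.2 <= 0) :
  forall (x : 'rV[R]_n) (y : R),
    (y < Gminus K (epigraph f) x ->
       setdist (x, y) K < setdist (x, y) (epigraph f)) /\
    (Gplus K (epigraph f) x < y ->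
       setdist (x, y) K > setdist (x, y) (epigraph f)).
Proof.
move=> x y.
have L0 : epigraph f !=set0 by exists (x, f x); rewrite /epigraph /=.
pose h := fun t => setdist (x, t) K - setdist (x, t) (epigraph f).
have hc : continuous h by exact: hcont.
have [y0 hy0] := lower_thr x hfc hfpos hstar.
have hup : forall t, f x <= t -> setdist (x, t) (epigraph f) < setdist (x, t) K.
  move=> t ht.
  have -> : setdist (x, t) (epigraph f) = 0.
    apply/le_anti; rewrite setdist_ge0 // andbT.
    by rewrite -(edist_xx (x, t)); apply: setdist_le; rewrite /epigraph /=.
  apply: setdist_pos => // Kp.
  have : (K `&` epigraph f) (x, t) by split.
  by rewrite hKL.
have Ebnd : forall z, equi_set K (epigraph f) x z -> y0 < z /\ z < f x.
  move=> z; rewrite /equi_set /= => Ez; split.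
    rewrite ltNge; apply/negP => hz; have := hy0 z hz; by rewrite Ez ltxx.
  rewrite ltNge; apply/negP => hz; have := hup z hz; by rewrite Ez ltxx.
have hE : forall c, h c = 0 -> equi_set K (epigraph f) x c.
  by move=> c /eqP; rewrite subr_eq0 => /eqP.
split.
  move=> hy; rewrite ltNge; apply/negP => hge.
  case: (leP y y0) => hyy0.
    by have := hy0 y hyy0; rewrite ltNge hge.
  have [c cin hc0] : exists2 c, c \in `[y0, y] & h c = 0.
    apply: IVT; first exact: ltW.
      exact: continuous_subspaceT.
    have := hy0 y0 (lexx _); rewrite /h => h1.
    apply/andP; split.
      rewrite ge_min; apply/orP; left; lra.
    rewrite le_max; apply/orP; right; lra.
  have Ec := hE c hc0.
  have : Gminus K (epigraph f) x <= c.
    apply: ge_inf => //; exists y0 => z /Ebnd [] /ltW //.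
  rewrite in_itv /= in cin; case/andP: cin => _ cy.
  lra.
move=> hy; rewrite ltNge; apply/negP => hge.
case: (leP (f x) y) => hyfx.
  by have := hup y hyfx; rewrite ltNge hge.
have [c cin hc0] : exists2 c, c \in `[y, f x] & h c = 0.
  apply: IVT; first exact: ltW.
    exact: continuous_subspaceT.
  have := hup (f x) (lexx _); rewrite /h => h1.
  apply/andP; split.
    rewrite ge_min; apply/orP; left; lra.
  rewrite le_max; apply/orP; right; lra.
have Ec := hE c hc0.
have : c <= Gplus K (epigraph f) x.
  apply: ub_le_sup => //; exists (f x) => z /Ebnd [] _ /ltW //.
rewrite in_itv /= in cin; case/andP: cin => yc _.
lra.
Qed.
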